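(* Let $(X,d)$ be a metric space, $f:X\to X$ a Borel measurable map and $\mu$ an $f$-invariant (i.e. $\mu=\mu\circ f^{-1}$) Borel probability measure that is an expansive measure of $f$. Then for every $p\in X$, $\mu(W^s(p))=0$, where $W^s(p)=\{x\in X:\lim_{n\to\infty}d(f^n(x),f^n(p))=0\}$.
   Context: A Borel probability measure $\mu$ is an expansive measure of $f$ if there is $\delta>0$ with $\mu(\Phi_\delta(x))=0$ for all $x\in X$, where $\Phi_\delta(x)=\{y\in X: d(f^i(y),f^i(x))\le\delta \text{ for all } i\in\mathbb{N}\}$, $\mathbb{N}=\{0,1,2,\dots\}$. *)

(* Defs.v *)
From HB Require Import structures.
From mathcomp Require Import all_boot all_order all_algebra.
From mathcomp Require Import all_classical all_reals all_analysis.
Set Implicit Arguments. Unset Strict Implicit. Unset Printing Implicit Defensive.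
Import Order.TTheory GRing.Theory Num.Theory numFieldNormedType.Exports.
Local Open Scope classical_set_scope.
Local Open Scope ring_scope.

Definition is_metric (R : realType) (X : Type) (d : X -> X -> R) : Prop :=
  [/\ forall x y, 0 <= d x y,
      forall x y, d x y = 0 <-> x = y,
      forall x y, d x y = d y x &
      forall x y z, d x z <= d x y + d y z].

Definition dball (R : realType) (X : Type) (d : X -> X -> R) (x : X) (e : R)
  : set X := [set y | d x y < e].

Definition dopen (R : realType) (X : Type) (d : X -> X -> R) : set (set X) :=
  [set A | forall x, A x -> exists2 e : R, 0 < e & dball d x e `<=` A].

Definition borel_space (R : realType) (X : pointedType) (d : X -> X -> R) :=
  g_sigma_algebraType (dopen d).

Definition Phi (R : realType) (X : Type) (d : X -> X -> R) (f : X -> X)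
  (delta : R) (x : X) : set X :=
  [set y | forall i : nat, d (iter i f y) (iter i f x) <= delta].

Definition stable_set (R : realType) (X : Type) (d : X -> X -> R) (f : X -> X)
  (p : X) : set X :=
  [set x | (fun n : nat => d (iter n f x) (iter n f p)) @ \oo --> (0 : R)].

(* Main.v *)
Require Import Defs.
From HB Require Import structures.
From mathcomp Require Import all_boot all_order all_algebra.
From mathcomp Require Import all_classical all_reals all_analysis.
From mathcomp Require Import lra.
Import Order.TTheory GRing.Theory Num.Theory numFieldNormedType.Exports.
Local Open Scope classical_set_scope.
Local Open Scope ring_scope.

Section S.
Variables (R : realType) (X : pointedType) (d : X -> X -> R) (f : X -> X).
Hypothesis hd : is_metric d.
Hypothesis mf : measurable_fun [set: borel_space d] (f : borel_space d -> borel_space d).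

Lemma cball_meas (q : X) (r : R) :
  measurable ([set y | d y q <= r] : set (borel_space d)).
Proof.
case: hd => d0 d0E dC dT.
rewrite -[X in measurable X]setCK; apply: measurableC.
apply: sub_sigma_algebra => y /= /negP; rewrite -ltNge => ry.
exists (d y q - r); first by rewrite subr_gt0.
move=> z; rewrite /dball /= => yz; apply/negP; rewrite -ltNge.
have := dT y z q; rewrite dC in yz.
have : d y z < d y q - r by rewrite dC.
lra.
Qed.

Lemma iter_meas n : measurable_fun [set: borel_space d]
  (iter n f : borel_space d -> borel_space d).
Proof.
elim: n => [|n IH] /=; first exact: measurable_id.
exact: (measurableT_comp mf IH).
Qed.

Lemma pre_meas n (A : set (borel_space d)) : measurable A ->
  measurable (((iter n f) @^-1` A) : set (borel_space d)).
Proof.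
move=> mA; rewrite -[X in measurable X]setTI.
exact: iter_meas.
Qed.
End S.

Lemma nearP (P : nat -> Prop) : (\forall n \near \oo, P n) <-> exists N, forall n, (N <= n)%N -> P n.
Proof.
split.
- by case=> N _ HN; exists N => n /HN.
- by case=> N HN; exists N => // n /HN.
Qed.

Theorem proposition3p2 (R : realType) (X : pointedType) (d : X -> X -> R)
  (f : X -> X)
  (mu : probability (borel_space d) R) :
  is_metric d ->
  measurable_fun [set: borel_space d] (f : borel_space d -> borel_space d) ->
  (forall A : set (borel_space d), measurable A -> mu (f @^-1` A) = mu A) ->
  (exists2 delta : R, 0 < delta & forall x : X, mu (Phi d f delta x) = 0%E) ->
  forall p : X, mu (stable_set d f p) = 0%E.
Proof.
move=> hd mf inv [delta d0 hPhi] p.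
have d0' : forall x y, 0 <= d x y by case: hd.
have invn : forall n (A : set (borel_space d)), measurable A ->
    mu ((iter n f) @^-1` A) = mu A.
  elim=> [|n IH] A mA //=.
  have mfA : measurable (f @^-1` A : set (borel_space d)).
    by rewrite -[X in measurable X]setTI; exact: mf.
  by rewrite -(inv A mA) -(IH _ mfA).
have mPhi : forall x, measurable (Phi d f delta x : set (borel_space d)).
  move=> x.
  have -> : Phi d f delta x = \bigcap_i ((iter i f) @^-1` [set y | d y (iter i f x) <= delta]).
    by apply/seteqP; split => y H i /=; [move=> _; exact: H | exact: (H i I)].
  apply: bigcapT_measurable => i; apply: pre_meas => //; exact: cball_meas.
set B := fun N => ((iter N f) @^-1` Phi d f delta (iter N f p) : set (borel_space d)).
have mB : forall N, measurable (B N) by move=> N; exact: pre_meas.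
have B0 : forall N, mu (B N) = 0%E by move=> N; rewrite /B invn.
have mW : measurable (stable_set d f p : set (borel_space d)).
  have -> : stable_set d f p = \bigcap_k \bigcup_N \bigcap_n
     ((iter (N + n) f) @^-1` [set y | d y (iter (N + n) f p) <= k.+1%:R^-1] : set (borel_space d)).
    apply/seteqP; split => x /=.
    - move/cvgrPdist_le => H k _.
      have /nearP [N HN] := H (k.+1%:R^-1) ltac:(by []).
      exists N => // n _ /=; have := HN (N + n)%N (leq_addr _ _).
      by rewrite sub0r normrN ger0_norm.
    - move=> H; apply/cvgrPdist_le => e e0.
      have /nearP [k Hk] := near_infty_natSinv_lt (PosNum e0).
      have [N _ HN] := H k I.
      apply/nearP; exists N => n Nn.
      have := HN (n - N)%N I; rewrite /= subnKC // => h.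
      rewrite sub0r normrN ger0_norm //.
      apply: (le_trans h); apply: ltW; apply: (le_lt_trans _ (Hk k (leqnn k))).
      by [].
  apply: bigcapT_measurable => k; apply: bigcupT_measurable => N.
  apply: bigcapT_measurable => n; apply: pre_meas => //; exact: cball_meas.
apply/eqP; rewrite eq_le measure_ge0 andbT.
have sub : stable_set d f p `<=` \bigcup_N B N.
  move=> x /cvgrPdist_le H.
  have /nearP [N HN] := H delta d0.
  exists N => // i.
  rewrite -!iterD; have := HN (i + N)%N (leq_addl _ _).
  by rewrite sub0r normrN ger0_norm.
have := measure_sigma_subadditive mu mB mW sub.
move=> h; apply: (le_trans h).
rewrite eseries0 // => i _ _; exact: B0.
Qed.
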